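(* In the setting below, assume that $g(x)$ and $l(x)$ are self-reciprocal. If $\gcd\big(r_{22}(x),\ g_{11}(x)\bar g_{12}(x)-g_{12}(x)\bar g_{11}(x)\big)\neq 1$, then $C$ is not symplectic LCD.
   Context: Let $q$ be a prime power, $F=\mathbb{F}_q$, $m\ge1$ with $\gcd(q,m)=1$, and $R=F[x]/\langle x^m-1\rangle$; elements of $R$ are represented by polynomials of degree $<m$ and identified with their coefficient vectors in $F^m$. A quasi-cyclic code of length $2m$ and index $2$ is an $R$-submodule $C\subseteq R^2$. For $a,b\in R$ let $\langle a,b\rangle_e$ be the standard dot product of their coefficient vectors. The symplectic form on $R^2$ is $\langle (a_1,a_2),(b_1,b_2)\rangle_s=\langle a_1,b_2\rangle_e-\langle a_2,b_1\rangle_e$; $C$ is symplectic LCD if $C\cap C^{\perp_s}=\{0\}$. For a nonzero polynomial $f$ of degree $k$, $f^*(x)=x^kf(x^{-1})$; $f$ is self-reciprocal if $f^*=\alpha f$ for some $\alpha\in F$. For a polynomial $f$ of degree at most $m$, $\bar f(x)=x^m f(x^{-1})$. Suppose $C$ is generated as an $R$-module by $(g_{11}(x),g_{12}(x))$ and $(0,g_{22}(x))$, where $g_{11},g_{12},g_{22}\in F[x]$ satisfy: $g_{11}\mid x^m-1$, $g_{22}\mid x^m-1$, $\deg g_{12}<\deg g_{22}$, and $g_{11}g_{22}\mid (x^m-1)g_{12}$. Define $g=\gcd(g_{11},g_{22})$, $l=(x^m-1)/\mathrm{lcm}(g_{11},g_{22})$, $g_{22}=g\,g_{22}'$, $r_{22}=\gcd(g_{22}',g_{22}'^*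 )$. *)

(* Defs.v *)
From HB Require Import structures.
From mathcomp Require Import all_boot all_order all_algebra.
Set Implicit Arguments. Unset Strict Implicit. Unset Printing Implicit Defensive.
Import GRing.Theory.
Local Open Scope ring_scope.

Section QCDefs.
Variable F : fieldType.

(* reciprocal f^*(x) = x^deg f * f(1/x), for f nonzero *)
Definition recip (f : {poly F}) : {poly F} :=
  \poly_(i < size f) f`_((size f).-1 - i).

Definition self_reciprocal (f : {poly F}) : Prop :=
  f != 0 /\ exists alpha : F, recip f = alpha *: f.

(* bar f (x) = x^m f(1/x), for deg f <= m *)
Definition polybar (m : nat) (f : {poly F}) : {poly F} :=
  \poly_(i < m.+1) f`_(m - i).

(* lcm of polynomials (up to a nonzero scalar, like gcdp) *)
Definition lcmp (p q : {poly F}) : {poly F} := (p * q) %/ gcdp p q.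

Definition edot (m : nat) (a b : {poly F}) : F := \sum_(i < m) a`_i * b`_i.

Definition sympl (m : nat) (u v : {poly F} * {poly F}) : F :=
  edot m u.1 v.2 - edot m u.2 v.1.

(* elements of R = F[x]/<x^m-1>, represented as polynomials of degree < m *)
Definition inR (m : nat) (a : {poly F}) : bool := (size a <= m)%N.

Definition qc_code (m : nat) (g11 g12 g22 : {poly F})
    (v : {poly F} * {poly F}) : Prop :=
  exists a b : {poly F},
    v = ((a * g11) %% ('X^m - 1), (a * g12 + b * g22) %% ('X^m - 1)).

Definition symplectic_LCD (m : nat) (C : {poly F} * {poly F} -> Prop) : Prop :=
  forall v, C v -> inR m v.1 -> inR m v.2 ->
    (forall c, C c -> sympl m c v = 0) -> v = (0, 0).
End QCDefs.

(* Main.v *)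
Require Import Defs.
From HB Require Import structures.
From mathcomp Require Import all_boot all_order all_algebra all_field.
From mathcomp Require Import ring zify.
Import GRing.Theory.
Local Open Scope ring_scope.

Lemma dvdX_cong0 (F : fieldType) (m a : nat) :
  ('X^m - 1 : {poly F}) %| 'X^a - 'X^(a %% m).
Proof.
rewrite {1}(divn_eq a m) exprD mulnC exprM.
have -> : ('X^m)^+(a %/ m) * 'X^(a %% m) - 'X^(a %% m) =
          (('X^m)^+(a %/ m) - 1^+(a %/ m)) * ('X^(a %% m) : {poly F}) by rewrite expr1n; ring.
by rewrite subrXX -mulrA dvdp_mulIl.
Qed.

Lemma dvdX_cong (F : fieldType) (m a b : nat) : a = b %[mod m] ->
  ('X^m - 1 : {poly F}) %| 'X^a - 'X^b.
Proof.
move=> h.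
have -> : ('X^a - 'X^b : {poly F}) = ('X^a - 'X^(a %% m)) - ('X^b - 'X^(b %% m)).
  by rewrite h; ring.
by rewrite dvdp_sub // dvdX_cong0.
Qed.

Lemma comp_cong2 (F : fieldType) (N p q u : {poly F}) : N %| p - q ->
  N %| (u \Po p) - (u \Po q).
Proof.
move=> h; elim/poly_ind: u => [|u c IH]; first by rewrite !comp_poly0 subrr dvdp0.
rewrite !comp_poly_MXaddC.
have -> : (u \Po p) * p + c%:P - ((u \Po q) * q + c%:P) =
   ((u \Po p) - (u \Po q)) * p + (u \Po q) * (p - q) by ring.
by apply: dvdp_add; [apply: dvdp_mulr | apply: dvdp_mull].
Qed.

Lemma dvdp_sumP (F : fieldType) (N : {poly F}) n (G : 'I_n -> {poly F}) :
  (forall i, N %| G i) -> N %| \sum_(i < n) G i.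
Proof.
move=> h; apply: (big_ind (fun p => N %| p)) => [|x y|i _] /=.
- exact: dvdp0.
- exact: dvdp_add.
- exact: h.
Qed.

Lemma polybar_sum (F : fieldType) (m : nat) (f : {poly F}) :
  polybar m f = \sum_(i < m.+1) f`_i *: 'X^(m - i).
Proof.
apply/polyP => k; rewrite /polybar coef_poly.
have -> : (\sum_(i < m.+1) f`_i *: 'X^(m - i))`_k =
      \sum_(i < m.+1 | (m - i)%N == k) f`_i.
  rewrite coef_sum [RHS]big_mkcond /=; apply: eq_bigr => i _.
  by rewrite coefZ coefXn eq_sym; case: (_ == _); rewrite ?mulr1 ?mulr0.
case: ltnP => hk.
  have hk' : (m - k < m.+1)%N by lia.
  rewrite (eq_bigl (fun i : 'I_m.+1 => i == Ordinal hk')); first by rewrite big_pred1_eq.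
  move=> i /=; apply/eqP/eqP => [h|->]; last by rewrite /=; lia.
  apply/val_inj => /=; have := ltn_ord i; lia.
rewrite big_pred0 // => i; apply/negbTE; have := ltn_ord i; lia.
Qed.

Lemma comp_sum (F : fieldType) (m : nat) (f q : {poly F}) :
  (size f <= m.+1)%N -> f \Po q = \sum_(i < m.+1) f`_i *: q ^+ i.
Proof.
move=> hs; rewrite comp_polyE (big_ord_widen _ (fun i => f`_i *: q ^+ i) hs).
rewrite big_mkcond /=; apply: eq_bigr => i _.
by case: ltnP => // h; rewrite nth_default // scale0r.
Qed.

Lemma barJ (F : fieldType) (m : nat) (f : {poly F}) : (0 < m)%N ->
  (size f <= m.+1)%N -> ('X^m - 1) %| polybar m f - (f \Po 'X^(m.-1)).
Proof.
move=> m0 hs; rewrite polybar_sum.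
have -> : f \Po 'X^(m.-1) = \sum_(i < m.+1) f`_i *: ('X^(m.-1)) ^+ i by apply: comp_sum.
rewrite -sumrB.
apply: dvdp_sumP => i; rewrite -scalerBr -mul_polyC; apply: dvdp_mull.
rewrite -exprM; apply: dvdX_cong.
have hi := ltn_ord i.
apply/eqP; rewrite -(eqn_modDr i).
have -> : (m - i + i = m)%N by lia.
have -> : (m.-1 * i + i = i * m)%N by rewrite -{2}(mul1n i) -mulnDl addn1 prednK // mulnC.
by rewrite modnn modnMl.
Qed.

Lemma J_dvd (F : fieldType) (m : nat) (p : {poly F}) : (0 < m)%N ->
  ('X^m - 1) %| p -> ('X^m - 1) %| (p \Po 'X^(m.-1)).
Proof.
move=> m0; rewrite dvdp_eq => /eqP ->; rewrite comp_polyM; apply: dvdp_mull.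
rewrite comp_polyB comp_polyC polyC1 comp_Xn_poly -exprM.
have := @dvdX_cong F m (m.-1 * m) 0; rewrite expr0; apply.
by rewrite modnMl mod0n.
Qed.

Lemma J_cong (F : fieldType) (m : nat) (p q : {poly F}) : (0 < m)%N ->
  ('X^m - 1) %| p - q -> ('X^m - 1) %| (p \Po 'X^(m.-1)) - (q \Po 'X^(m.-1)).
Proof. by move=> m0 h; rewrite -comp_polyB; apply: J_dvd. Qed.

Lemma JJ (F : fieldType) (m : nat) (t : {poly F}) : (0 < m)%N ->
  ('X^m - 1) %| ((t \Po 'X^(m.-1)) \Po 'X^(m.-1)) - t.
Proof.
move=> m0; rewrite -comp_polyA comp_Xn_poly -exprM.
rewrite -{2}(comp_polyXr t); apply: comp_cong2.
have := @dvdX_cong F m (m.-1 * m.-1) 1; rewrite expr1; apply.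
case: m m0 => // [[|k]] _ //.
rewrite /=.
have -> : (k.+1 * k.+1 = k * k.+2 + 1)%N by rewrite !mulSn !mulnS; lia.
by rewrite modnMDl.
Qed.

Lemma bar_recip (F : fieldType) (m : nat) (f : {poly F}) :
  (size f <= m.+1)%N -> polybar m f = 'X^(m.+1 - size f) * recip f.
Proof.
move=> hs; apply/polyP => k; rewrite coefXnM /polybar /recip !coef_poly.
set s := size f in hs *.
case: (ltnP k (m.+1 - size f)) => h1.
  case: ltnP => h2 //; rewrite nth_default //; rewrite -/s; lia.
case: (ltnP k m.+1) => h2; case: ltnP => h3 //.
- congr (_`_ _); lia.
- lia.
- rewrite nth_default //; rewrite -/s; lia.
Qed.

Lemma edot_bar (F : fieldType) (m : nat) (u w : {poly F}) :
  (size u <= m)%N -> (size w <= m)%N -> edot m u w = (u * polybar m w)`_m.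
Proof.
move=> hu hw; rewrite coefM big_ord_recr /= (nth_default _ hu) mul0r addr0.
rewrite /edot; apply: eq_bigr => i _; rewrite /polybar coef_poly.
have hi := ltn_ord i.
rewrite ifT; last lia.
by congr (_ * _`_ _); lia.
Qed.

Lemma XmN0 (F : fieldType) (m : nat) : (0 < m)%N -> ('X^m - 1 : {poly F}) != 0.
Proof. by move=> m0; apply: monic_neq0; apply: monicXnsubC. Qed.

Lemma key_coef (F : fieldType) (m : nat) (P : {poly F}) : (0 < m)%N ->
  (size P <= m + m)%N -> P`_0 = 0 -> ('X^m - 1) %| P -> P`_m = 0.
Proof.
move=> m0 hs h0; rewrite dvdp_eq => /eqP E.
set Q := P %/ _ in E.
have hQ : (size Q <= m)%N.
  case: (eqVneq Q 0) => [->|Qn0]; first by rewrite size_poly0.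
  have e : size P = (size Q + m)%N.
    by rewrite E size_mul ?XmN0 // size_XnsubC // addnS.
  by move: hs; rewrite e; lia.
move: h0; rewrite E mulrBr mulr1 !coefB !coefMXn ltnn subnn m0 sub0r.
by move/eqP; rewrite oppr_eq0 => /eqP ->; rewrite (nth_default _ hQ) subr0.
Qed.

Lemma size_bar (F : fieldType) (m : nat) (f : {poly F}) : (size (polybar m f) <= m.+1)%N.
Proof. exact: size_poly. Qed.

Lemma sizeM_le (F : fieldType) (m : nat) (u w : {poly F}) :
  (size u <= m)%N -> (size (u * polybar m w)%R <= m + m)%N.
Proof.
move=> hu; apply: leq_trans (size_polyMleq _ _) _.
have := size_bar _ m w; set a := size (polybar m w); set b := size u in hu *; lia.
Qed.

Lemma sympl0 (F : fieldType) (m : nat) (c1 c2 v1 v2 : {poly F}) : (0 < m)%N ->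
  (size c1 <= m)%N -> (size c2 <= m)%N -> (size v1 <= m)%N -> (size v2 <= m)%N ->
  ('X^m - 1) %| c1 * polybar m v2 - c2 * polybar m v1 ->
  sympl m (c1, c2) (v1, v2) = 0.
Proof.
move=> m0 h1 h2 h3 h4 hd; rewrite /sympl /= !edot_bar // -coefB.
apply: key_coef => //.
- apply: (leq_trans (size_polyD _ _)); rewrite size_polyN geq_max.
  by rewrite !sizeM_le.
- rewrite coefB !coef0M /polybar !coef_poly /= subn0.
  by rewrite (nth_default _ h3) (nth_default _ h4) !mulr0 subr0.
Qed.

Lemma mR_neq0 (F : finFieldType) (m : nat) : coprime #|F| m -> (m%:R : F) != 0.
Proof.
move=> cop; have [p pr pc] := finPcharP F.
have h : #|F| = (p ^ logn p #|F|)%N := card_pprimeChar pc.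
have pF : (p %| #|F|)%N.
  case e: (logn p #|F|) h => [|k] h.
    by move: (finNzRing_gt1 F); rewrite h.
  by rewrite h expnS dvdn_mulr.
apply/negP; rewrite -(dvdn_pcharf pc) => pm.
have : (p %| gcdn #|F| m)%N by rewrite dvdn_gcd pF pm.
by rewrite (eqP cop) dvdn1 => /eqP p1; rewrite p1 in pr.
Qed.

Lemma sqfree_X (F : fieldType) (m : nat) (s : {poly F}) : (0 < m)%N ->
  (m%:R : F) != 0 -> s * s %| 'X^m - 1 -> s %| 1.
Proof.
move=> m0 mn0; rewrite dvdp_eq => /eqP E.
have hd : s %| ('X^m - 1)^`().
  rewrite E !derivM; apply: dvdp_add; first by apply: dvdp_mull; apply: dvdp_mulr.
  by apply: dvdp_mull; apply: dvdp_add; [apply: dvdp_mull|apply: dvdp_mulr].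
move: hd; rewrite derivB derivXn derivC subr0 -scaler_nat dvdpZr // => hX.
have hXm : s %| 'X^m by rewrite -(prednK m0) exprSr; apply: dvdp_mulr.
have -> : (1 : {poly F}) = 'X^m - ('X^m - 1) by ring.
apply: dvdp_sub => //; rewrite E; apply: dvdp_mull; exact: dvdp_mulr.
Qed.


Lemma modN (F : fieldType) (N p : {poly F}) : N %| (p %% N) - p.
Proof.
have -> : p %% N - p = - (p %/ N) * N by rewrite {2}(divp_eq p N); ring.
exact: dvdp_mull.
Qed.

Lemma cM (F : fieldType) (N p1 q1 p2 q2 : {poly F}) :
  N %| p1 - q1 -> N %| p2 - q2 -> N %| p1 * p2 - q1 * q2.
Proof.
move=> h1 h2.
have -> : p1 * p2 - q1 * q2 = p1 * (p2 - q2) + (p1 - q1) * q2 by ring.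
by apply: dvdp_add; [apply: dvdp_mull | apply: dvdp_mulr].
Qed.

Lemma cT (F : fieldType) (N p q r : {poly F}) :
  N %| p - q -> N %| q - r -> N %| p - r.
Proof.
move=> h1 h2; have -> : p - r = (p - q) + (q - r) by ring.
exact: dvdp_add.
Qed.

Lemma cB (F : fieldType) (N p1 q1 p2 q2 : {poly F}) :
  N %| p1 - q1 -> N %| p2 - q2 -> N %| (p1 - p2) - (q1 - q2).
Proof.
move=> h1 h2; have -> : (p1 - p2) - (q1 - q2) = (p1 - q1) - (p2 - q2) by ring.
exact: dvdp_sub.
Qed.

Lemma cD (F : fieldType) (N p1 q1 p2 q2 : {poly F}) :
  N %| p1 - q1 -> N %| p2 - q2 -> N %| (p1 + p2) - (q1 + q2).
Proof.
move=> h1 h2; have -> : (p1 + p2) - (q1 + q2) = (p1 - q1) + (p2 - q2) by ring.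
exact: dvdp_add.
Qed.

Lemma cR (F : fieldType) (N p : {poly F}) : N %| p - p.
Proof. by rewrite subrr dvdp0. Qed.

Lemma size_modN (F : fieldType) (m : nat) (p : {poly F}) : (0 < m)%N ->
  (size (p %% ('X^m - 1))%R <= m)%N.
Proof.
move=> m0; have := ltn_modp p ('X^m - 1); rewrite XmN0 // size_XnsubC //.
Qed.

Arguments cT {F N p q r} _ _.
Arguments cM {F N p1 q1 p2 q2} _ _.
Arguments cB {F N p1 q1 p2 q2} _ _.
Arguments cD {F N p1 q1 p2 q2} _ _.
Arguments barJ {F m f} _ _.
Arguments J_cong {F m p q} _ _.
Arguments modN {F N} p.
Arguments size_modN {F m} p _.

Lemma cT0 (F : fieldType) (N p q : {poly F}) : N %| p - q -> N %| q -> N %| p.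
Proof. move=> h1 h2; have -> : p = (p - q) + q by ring. exact: dvdp_add. Qed.
Arguments cT0 {F N p q} _ _.

Theorem lemma5p5 (F : finFieldType) (m : nat) (g11 g12 g22 : {poly F}) :
  (0 < m)%N -> coprime #|F| m ->
  g11 %| 'X^m - 1 -> g22 %| 'X^m - 1 ->
  (size g12 < size g22)%N ->
  g11 * g22 %| ('X^m - 1) * g12 ->
  let g := gcdp g11 g22 in
  let l := ('X^m - 1) %/ lcmp g11 g22 in
  let g22' := g22 %/ g in
  let r22 := gcdp g22' (recip g22') in
  self_reciprocal g -> self_reciprocal l ->
  ~~ coprimep r22 (g11 * polybar m g12 - g12 * polybar m g11) ->
  ~ symplectic_LCD m (qc_code m g11 g12 g22).
Proof.
move=> m0 cop h11 h22 hsz _ g l g22' r22 _ _ hnc LCD.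
set N : {poly F} := 'X^m - 1 in h11 h22 LCD.
set e := g11 * polybar m g12 - g12 * polybar m g11 in hnc.
set r := gcdp r22 e.
have Nn0 : N != 0 by apply: XmN0.
have sN : size N = m.+1 by rewrite size_XnsubC.
have rnc : size r != 1%N by [].
have re : r %| e by apply: dvdp_gcdr.
have rr22 : r %| r22 by apply: dvdp_gcdl.
have gg22 : g %| g22 by apply: dvdp_gcdr.
have Eg22 : g22' * g = g22 by apply: divpK.
have g22'd : g22' %| g22 by rewrite -Eg22; apply: dvdp_mulr.
have rg22' : r %| g22' by apply: (dvdp_trans rr22); apply: dvdp_gcdl.
have rrec : r %| recip g22' by apply: (dvdp_trans rr22); apply: dvdp_gcdr.
have rg22 : r %| g22 by apply: (dvdp_trans rg22').
have rN : r %| N by apply: (dvdp_trans rg22).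
set t := N %/ r.
have Et : t * r = N by apply: divpK.
have tn0 : t != 0 by apply: contraNneq Nn0 => t0; rewrite -Et t0 mul0r.
set a := t \Po 'X^(m.-1).
have hJa : N %| (a \Po 'X^(m.-1)) - t by apply: JJ.
have s11 : (size g11 <= m.+1)%N by rewrite -sN; apply: dvdp_leq.
have s22 : (size g22 <= m.+1)%N by rewrite -sN; apply: dvdp_leq.
have s12 : (size g12 <= m.+1)%N by apply: ltnW; apply: (leq_trans hsz).
have barv : forall w, N %| polybar m ((a * w) %% N) - t * (w \Po 'X^(m.-1)).
  move=> w; apply: (cT (barJ m0 _)).
    by apply: (leq_trans (size_modN _ m0)).
  apply: (cT (J_cong m0 (modN _))).
  rewrite comp_polyM; apply: cM => //; exact: cR.
have he : N %| e - (g11 * (g12 \Po 'X^(m.-1)) - g12 * (g11 \Po 'X^(m.-1))).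
  by apply: cB; apply: cM; (try exact: cR); apply: barJ.
have hull : forall c, qc_code m g11 g12 g22 c ->
    sympl m c ((a * g11) %% N, (a * g12 + 0 * g22) %% N) = 0.
  move=> c [al [be ->]]; apply: sympl0 => //; try exact: size_modN.
  set J11 := g11 \Po 'X^(m.-1); set J12 := g12 \Po 'X^(m.-1).
  have b2 : N %| polybar m ((a * g12 + 0 * g22) %% N) - t * J12.
    by rewrite mul0r addr0; apply: barv.
  have b1 := barv g11.
  apply: (cT0 (cB (cM (modN _) b2) (cM (modN _) b1))).
  have -> : al * g11 * (t * J12) - (al * g12 + be * g22) * (t * J11) =
     (al * t) * (g11 * J12 - g12 * J11) - be * t * g22 * J11 by ring.
  have h2 : N %| be * t * g22 * J11.
    have -> : be * t * g22 * J11 = (be * J11) * (t * g22) by ring.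
    by apply: dvdp_mull; rewrite -Et; apply: dvdp_mul (dvdpp t) rg22.
  have h1 : N %| (al * t) * e.
    rewrite -mulrA; apply: dvdp_mull; rewrite -Et; exact: dvdp_mul (dvdpp t) re.
  have -> : al * t * (g11 * J12 - g12 * J11) - be * t * g22 * J11 =
    (al * t * e - be * t * g22 * J11) - al * t * (e - (g11 * J12 - g12 * J11)) by ring.
  apply: dvdp_sub; first exact: dvdp_sub.
  by apply: dvdp_mull; exact: he.
have hv := LCD _ (ex_intro _ a (ex_intro _ 0 erefl)) (size_modN _ m0) (size_modN _ m0) hull.
case: hv => hv1 _.
have hNa : N %| a * g11.
  by have := @modN _ N (a * g11); rewrite hv1 sub0r dvdpNr.
have hJ := J_dvd _ _ _ m0 hNa; rewrite comp_polyM in hJ.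
set J11 := g11 \Po 'X^(m.-1) in hJ.
have htJ : N %| t * J11.
  have -> : t * J11 = (a \Po 'X^(m.-1)) * J11 - ((a \Po 'X^(m.-1)) - t) * J11 by ring.
  by apply: dvdp_sub => //; apply: dvdp_mulr.
have rJ11 : r %| J11 by rewrite -(dvdp_mul2l _ _ tn0) Et.
have s22' : (size g22' <= m.+1)%N by rewrite -sN; apply: dvdp_leq => //; apply: (dvdp_trans g22'd).
have rbar : r %| polybar m g22' by rewrite bar_recip //; apply: dvdp_mull.
have rJ22 : r %| g22' \Po 'X^(m.-1).
  have -> : g22' \Po 'X^(m.-1) = polybar m g22' - (polybar m g22' - (g22' \Po 'X^(m.-1))) by ring.
  by apply: dvdp_sub => //; apply: (dvdp_trans rN); apply: barJ.
have cop' : coprimep g11 g22'.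
  apply/negPn/negP => nc.
  set s := gcdp g11 g22' in nc.
  have s11' : s %| g11 by apply: dvdp_gcdl.
  have s22'' : s %| g22' by apply: dvdp_gcdr.
  have sg : s %| g by rewrite dvdp_gcd s11' (dvdp_trans s22'').
  have ss : s * s %| N by apply: (dvdp_trans _ h22); rewrite -Eg22; apply: dvdp_mul.
  have := @sqfree_X _ m s m0 (mR_neq0 _ _ cop) ss.
  by rewrite dvdp1 => hs; move: nc; rewrite /coprimep hs.
case/Bezout_eq1_coprimepP: cop' => [[u v] /= Euv].
have := congr1 (fun p => p \Po 'X^(m.-1)) Euv.
rewrite /= comp_polyD !comp_polyM -polyC1 comp_polyC polyC1 => E'.
have : r %| 1.
  by rewrite -E'; apply: dvdp_add; apply: dvdp_mull.
by rewrite dvdp1 (negbTE rnc).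
Qed.
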